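(* Let $G$ be a graph with a bramble $\mathcal{B}$ and let $\ell$ be a nonnegative integer. Let $S$ and $T$ be subsets of $V(G)$ such that $\mathcal{B}_S$ and $\mathcal{B}_T$ both have order at least $\ell$. Then there are $\ell$ pairwise vertex-disjoint paths in $G$ from $S$ to $T$.
   Context: All graphs are finite and simple. A bramble $\mathcal{B}$ in a graph $G$ is a family of connected subgraphs of $G$ such that every two of them share a vertex or are joined by an edge of $G$. A hitting set for $\mathcal{B}$ is a set of vertices intersecting every element of $\mathcal{B}$; the order of $\mathcal{B}$ is the minimum size of a hitting set. Any subset of a bramble is a bramble. For $X\subseteq V(G)$, $\mathcal{B}_X$ denotes the set of elements of $\mathcal{B}$ that intersect $X$. *)

(* Defs.v *)
From mathcomp Require Import all_boot.
Set Implicit Arguments. Unset Strict Implicit. Unset Printing Implicit Defensive.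

Section Graphs.
Variable V : finType.

Definition simple_graph (e : rel V) : Prop := symmetric e /\ irreflexive e.

Definition induced (e : rel V) (X : {set V}) : rel V :=
  [rel u v | [&& e u v, u \in X & v \in X]].

(* X induces a connected (nonempty) subgraph; a connected subgraph of G is
   identified with its vertex set, which then induces a connected subgraph. *)
Definition connected_set (e : rel V) (X : {set V}) : Prop :=
  X != set0 /\ {in X &, forall x y, connect (induced e X) x y}.

Definition touch (e : rel V) (X Y : {set V}) : Prop :=
  (exists2 x, x \in X & x \in Y) \/
  (exists x, exists y, [/\ x \in X, y \in Y & e x y]).

Definition bramble (e : rel V) (B : {set {set V}}) : Prop :=
  (forall X, X \in B -> connected_set e X) /\
  (forall X Y, X \in B -> Y \in B -> touch e X Y).

Definition hitting_set (B : {set {set V}}) (H : {set V}) : Prop :=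
  forall X, X \in B -> (X :&: H) != set0.

Definition order_at_least (B : {set {set V}}) (l : nat) : Prop :=
  forall H, hitting_set B H -> l <= #|H|.

Definition bramble_restr (B : {set {set V}}) (X : {set V}) : {set {set V}} :=
  [set Y in B | (Y :&: X) != set0].

Definition path_from_to (e : rel V) (S T : {set V}) (p : seq V) : Prop :=
  exists x, exists q, [/\ p = x :: q, path e x q, uniq p, x \in S & last x q \in T].

End Graphs.

(* Main.v *)
Require Import Defs.
From mathcomp Require Import all_boot.
From Stdlib Require Import Classical.
Set Implicit Arguments. Unset Strict Implicit. Unset Printing Implicit Defensive.

Section Menger.
Variable V : finType.
Implicit Types (e f : rel V) (S T Z A Y : {set V}).

Definition avoid e Z : rel V := [rel u v | [&& e u v, u \notin Z & v \notin Z]].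
Definition reach e Z s t := (s \notin Z) && connect (avoid e Z) s t.
Definition sep e S T Z := forall s t, s \in S -> t \in T -> ~~ reach e Z s t.
Definition pth e S T (p : seq V) :=
  if p is x :: q then [&& path e x q, uniq (x :: q), x \in S & last x q \in T] else false.
Definition tpth e S T (p : seq V) :=
  if p is x :: q then pth e S T p && all (fun v => v \notin T) (belast x q) else false.
Definition disj k (P : 'I_k -> seq V) :=
  forall i j, i != j -> forall v, v \in P i -> v \notin P j.

Lemma path_avoid e Z x p : path e x p -> all (fun v => v \notin Z) (x :: p) ->
  path (avoid e Z) x p.
Proof.
elim: p x => //= y p IH x /andP[exy pp] /and3P[xZ yZ ap].
by rewrite /avoid /= exy xZ yZ /= IH //= yZ.
Qed.

Lemma reach_of_path e Z x p v : path e x p -> all (fun v => v \notin Z) (x :: p) ->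
  v \in x :: p -> reach e Z x v.
Proof.
move=> pp ap vin; rewrite /reach.
move: (ap); rewrite /= => /andP[-> _] /=.
exact: (path_connect (path_avoid pp ap)).
Qed.

Lemma reach_end e Z s t : reach e Z s t -> t \notin Z.
Proof.
case/andP=> sZ /connectP[p pp ->]; elim: p s sZ pp => //= y p IH s sZ /andP[/and3P[_ _ yZ] pp].
exact: IH.
Qed.

Lemma reach_trans e Z a b c : reach e Z a b -> reach e Z b c -> reach e Z a c.
Proof.
case/andP=> aZ ab /andP[_ bc]; rewrite /reach aZ /=; exact: connect_trans ab bc.
Qed.

Lemma avoid_sym e Z : symmetric e -> symmetric (avoid e Z).
Proof. by move=> se u v; rewrite /avoid /= se; case: (u \in Z); case: (v \in Z); rewrite ?andbF. Qed.

Lemma reach_sym e Z a b : symmetric e -> reach e Z a b -> reach e Z b a.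
Proof.
move=> se r; rewrite /reach (reach_end r) /=.
by rewrite (sym_connect_sym (avoid_sym Z se)); case/andP: r.
Qed.

Lemma reach_sub e f Z1 Z2 a b : (forall u v, e u v -> f u v) -> Z1 \subset Z2 ->
  reach e Z2 a b -> reach f Z1 a b.
Proof.
move=> ef sZ /andP[aZ ab]; rewrite /reach.
have nin : forall u, u \notin Z2 -> u \notin Z1.
  by move=> u; apply: contra; apply: (subsetP sZ).
rewrite nin //=; apply: connect_sub ab => u v /and3P[euv uZ vZ].
by apply: connect1; rewrite /avoid /= ef // !nin.
Qed.

Lemma reach_step e Z a b c : reach e Z a b -> e b c -> c \notin Z -> reach e Z a c.
Proof.
move=> r ebc cZ; have bZ := reach_end r; apply: (reach_trans r); rewrite /reach bZ /=.
by apply: connect1; rewrite /avoid /= ebc bZ cZ.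
Qed.

Lemma reach0 e Z a : a \notin Z -> reach e Z a a.
Proof. by move=> aZ; rewrite /reach aZ connect0. Qed.

Lemma conn_ind (R : rel V) (P : V -> Prop) a b :
  (forall u v, R u v -> P u -> P v) -> connect R a b -> P a -> P b.
Proof.
move=> st /connectP[p pp ->]; elim: p a pp => //= y p IH a /andP[ay pp] Pa.
by apply: IH pp _; apply: st Pa.
Qed.

Lemma sep_sym e S T Z : symmetric e -> sep e S T Z -> sep e T S Z.
Proof.
by move=> se sZ t s tT sS; apply/negP => /(reach_sym se) r; move: (sZ s t sS tT); rewrite r.
Qed.


Lemma sepYx e e' S T Y Z x y :
  (forall u v, e' u v -> e u v) ->
  (forall u v, e u v -> ~~ e' u v -> ((u == x) && (v == y)) || ((u == y) && (v == x))) ->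
  sep e' S T Y -> (forall s, s \in S -> ~~ reach e' Y s y) ->
  sep e' S (x |: Y) Z -> sep e S T Z.
Proof.
move=> sub rem sY nCS sZ s t sS tT; apply/negP => /andP[sZ' st].
have sx : s \notin x |: Y.
  by apply/negP => sin; move: (sZ s s sS sin); rewrite reach0.
have I : reach e' (Z :|: (x |: Y)) s t.
  apply: (conn_ind (P := fun v => reach e' (Z :|: (x |: Y)) s v)) st _; last first.
    by apply: reach0; rewrite in_setU negb_or sZ' sx.
  move=> a b /and3P[eab aZ bZ] Ia.
  have := reach_end Ia; rewrite in_setU negb_or => /andP[_ aYx].
  have ra : reach e' Z s a by apply: reach_sub Ia => //; apply: subsetUl.
  case e'ab: (e' a b).
    case bYx: (b \in x |: Y).
      by move: (sZ s b sS bYx); rewrite (reach_step ra e'ab bZ).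
    by apply: reach_step Ia e'ab _; rewrite in_setU negb_or bZ bYx.
  move: (rem a b eab); rewrite e'ab => /(_ isT) /orP[/andP[/eqP ax _]|/andP[/eqP ay /eqP bx]].
    by move: aYx; rewrite ax setU11.
  have : reach e' Y s y.
    rewrite -ay; apply: reach_sub Ia => //.
    by apply: subset_trans (subsetUr _ _); apply: subsetUr.
  by rewrite (negbTE (nCS s sS)).
move: (sY s t sS tT); rewrite (reach_sub _ _ I) // .
by apply: subset_trans (subsetUr _ _); apply: subsetUr.
Qed.

Lemma close e e' S Y x y a b :
  (forall u v, e' u v -> e u v) ->
  (forall u v, e u v -> ~~ e' u v -> ((u == x) && (v == y)) || ((u == y) && (v == x))) ->
  (exists2 s, s \in S & reach e' Y s x) -> (exists2 s, s \in S & reach e' Y s y) ->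
  a \in S -> reach e Y a b -> exists2 s, s \in S & reach e' Y s b.
Proof.
move=> sub rem [sx Sx rx] [sy Sy ry] aS /andP[aY ab].
apply: (conn_ind (P := fun v => exists2 s, s \in S & reach e' Y s v)) ab _;
  last by exists a => //; apply: reach0.
move=> u v /and3P[euv uY vY] [s sS rsu].
case e'uv: (e' u v); first by exists s => //; apply: reach_step rsu e'uv vY.
move: (rem u v euv); rewrite e'uv => /(_ isT) /orP[/andP[_ /eqP ->]|/andP[_ /eqP ->]].
  by exists sy.
by exists sx.
Qed.

Lemma trunc_ex f S A p : pth f S A p -> exists p', tpth f S A p' && all (mem p) p'.
Proof.
case: p => // x q /and4P[pq uq xS lA].
have hA : has (mem A) (x :: q) by apply/hasP; exists (last x q) => //; exact: mem_last.
have : exists s1 u s2, x :: q = rcons s1 u ++ s2 /\ u \in A /\ ~~ has (mem A) s1.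
  by case: (split_find hA) => u s1 s2 uA nh; exists s1, u, s2.
move=> [s1 [u [s2 [E [uA nh]]]]]; exists (rcons s1 u).
case: s1 E nh => [|z s1] /= E nh.
  case: E => xu qs; subst.
  by rewrite /tpth /pth /= xS uA /= mem_head.
case: E => zx qE; subst z q.
move: pq uq; rewrite cat_path -cat_cons cat_uniq => /andP[pq _] /andP[uq _].
rewrite /tpth /pth belast_rcons last_rcons pq xS uA; move: uq => /= -> /=.
apply/and3P; split.
- rewrite -/(all (fun v => v \notin A) (x :: s1)).
  have nh' : ~~ has (mem A) (x :: s1) := nh.
  apply/allP => v vin; apply/negP => vA; move/hasP: nh'; apply; by exists v.
- by rewrite mem_head.
- by apply/allP => v vin; rewrite /= in_cons mem_cat vin orbT.
Qed.

Lemma trunc_fam f S A k (P : 'I_k -> seq V) : (forall i, pth f S A (P i)) -> disj P ->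
  exists P' : 'I_k -> seq V, (forall i, tpth f S A (P' i)) /\ disj P'.
Proof.
move=> HP dP; exists (fun i => xchoose (trunc_ex (HP i))).
have sub i w : w \in xchoose (trunc_ex (HP i)) -> w \in P i.
  by case/andP: (xchooseP (trunc_ex (HP i))) => _ /allP; apply.
split => [i|i j ij v vi]; first by case/andP: (xchooseP (trunc_ex (HP i))).
apply/negP => vj; move: (dP i j ij v (sub _ _ vi)); by rewrite (sub _ _ vj).
Qed.

Lemma tp_case f S A Y s q z : tpth f S A (s :: q) -> Y \subset A -> z \in s :: q ->
  reach f Y s z \/ [/\ z \in Y, z = last s q & z \notin belast s q].
Proof.
move=> /andP[/and4P[pq uq sS lA] ab] YA zin.
have nY : forall v, v \notin A -> v \notin Y.
  by move=> v; apply: contra; apply: (subsetP YA).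
have abY : forall l, all (fun v => v \notin A) l -> all (fun v => v \notin Y) l.
  by move=> l /allP al; apply/allP => v vin; apply: nY; apply: al.
case/lastP: q pq uq lA ab zin => [|q w] pq uq lA ab zin.
  move: zin; rewrite mem_seq1 => /eqP ->.
  case: (boolP (s \in Y)) => sY; first by right.
  by left; apply: reach0.
rewrite belast_rcons in ab *; rewrite last_rcons in lA *.
move: pq; rewrite rcons_path => /andP[pq ew].
move: uq; rewrite -rcons_cons rcons_uniq => /andP[wn uq'].
move: zin; rewrite -rcons_cons mem_rcons in_cons => /orP[/eqP zw | zin].
  case: (boolP (w \in Y)) => wY; first by right; rewrite zw.
  left; apply: (reach_of_path (p := rcons q w)).
  - by rewrite rcons_path pq ew.
  - by rewrite -rcons_cons all_rcons wY abY.
  - by rewrite zw -rcons_cons mem_rcons mem_head.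
left; apply: (reach_of_path (p := q)) => //; exact: abY.
Qed.

Lemma cross e' S T Y x y p r z d : symmetric e' -> sep e' S T Y ->
  tpth e' S (x |: Y) p -> tpth e' T (y |: Y) r -> z \in p -> z \in r ->
  [/\ z \in Y, z = last (head d p) (behead p), z = last (head d r) (behead r)
    & z \notin belast (head d r) (behead r)].
Proof.
move=> se sY; case: p => // s q tp; case: r => // t r0 tr zp zr /=.
have sS : s \in S by case/andP: tp => /and4P[].
have tT : t \in T by case/andP: tr => /and4P[].
have [rt|[zY zr' nr]] := tp_case tr (subsetUr _ _) zr;
  have [rs|[zY' zp' _]] := tp_case tp (subsetUr _ _) zp.
- by move: (sY s t sS tT); rewrite (reach_trans rs (reach_sym se rt)).
- by move: (reach_end rt); rewrite zY'.
- by move: (reach_end rs); rewrite zY.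
- by split.
Qed.


Lemma rev_path_sym f a l : symmetric f -> path f a l -> path f (last a l) (rev (belast a l)).
Proof.
move=> sf pl; rewrite rev_path; rewrite (@eq_path _ _ f) // => u v /=; exact: sf.
Qed.

Lemma last_rev_belast (t : V) r0 : last (last t r0) (rev (belast t r0)) = t.
Proof.
case/lastP: r0 => [|r w] //; rewrite last_rcons belast_rcons rev_cons.
by rewrite last_rcons.
Qed.

Lemma combine e e' S T Y k x y (P R : 'I_k -> seq V) :
  symmetric e' -> (forall u v, e' u v -> e u v) -> e x y -> sep e' S T Y -> #|Y| < k ->
  (forall i, tpth e' S (x |: Y) (P i)) -> disj P ->
  (forall i, tpth e' T (y |: Y) (R i)) -> disj R ->
  exists c : 'I_k -> seq V, (forall i, pth e S T (c i)) /\ disj c.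
Proof.
move=> se' sub exy sY Yk HP dP HR dR.
pose ep (p : seq V) := last (head x p) (behead p).
have ep_in : forall p, p != [::] -> ep p \in p by case=> // a l _; exact: mem_last.
have HPn i : P i != [::] by move: (HP i); case: (P i).
have HRn i : R i != [::] by move: (HR i); case: (R i).
have epP i : ep (P i) \in x |: Y.
  by move: (HP i); rewrite /ep; case: (P i) => // a l /andP[/and4P[_ _ _ ->] _].
have epR i : ep (R i) \in y |: Y.
  by move: (HR i); rewrite /ep; case: (R i) => // a l /andP[/and4P[_ _ _ ->] _].
have injP : injective (fun i => ep (P i)).
  move=> i j /= eq; apply/eqP; apply/negPn/negP => ij.
  by move: (dP i j ij _ (ep_in _ (HPn i))); rewrite eq ep_in.
have injR : injective (fun i => ep (R i)).
  move=> i j /= eq; apply/eqP; apply/negPn/negP => ij.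
  by move: (dR i j ij _ (ep_in _ (HRn i))); rewrite eq ep_in.
have card_arg : forall (g : 'I_k -> V) (a : V), injective g -> (forall i, g i \in a |: Y) ->
    g @: [set: 'I_k] = a |: Y /\ a \notin Y.
  move=> g a ig gi.
  have sub1 : g @: [set: 'I_k] \subset a |: Y.
    by apply/subsetP => v /imsetP[i _ ->]; exact: gi.
  have c1 : #|g @: [set: 'I_k]| = k by rewrite card_imset // cardsT card_ord.
  have := subset_leq_card sub1; rewrite c1 cardsU1.
  case: (boolP (a \in Y)) => aY /= hk; first by move: Yk; rewrite ltnNge hk.
  split => //; apply/eqP; rewrite eqEcard sub1 c1 cardsU1 aY /=.
  by rewrite add1n.
have [imP xY] := card_arg _ _ injP epP.
have [imR yY] := card_arg _ _ injR epR.
pose w i := if ep (P i) == x then y else ep (P i).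
have wY i : w i \in y |: Y.
  rewrite /w; case: eqP => [_|ne]; first by rewrite setU11.
  move: (epP i); rewrite in_setU1 => /orP[/eqP//|vY]; by rewrite in_setU1 vY orbT.
have surj i : exists j0, ep (R j0) == w i.
  by have := wY i; rewrite -imR => /imsetP[j0 _ ->]; exists j0.
pose j i := odflt i [pick j0 | ep (R j0) == w i].
have jP i : ep (R (j i)) = w i.
  rewrite /j; case: pickP => [j0 /eqP //| none].
  by case: (surj i) => j0 h; move: (none j0); rewrite h.
have winj : injective w.
  move=> a b; rewrite /w.
  case: eqP => [ax|nax]; case: eqP => [bx|nbx] //.
  - by move=> _; apply: injP => /=; rewrite ax bx.
  - move=> yb; move: (epP b); rewrite in_setU1 -yb (negbTE yY) orbF => /eqP yx.
    by case: nbx; rewrite -yb yx.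
  - move=> ay; move: (epP a); rewrite in_setU1 ay (negbTE yY) orbF => /eqP yx.
    by case: nax; rewrite ay yx.
  - exact: injP.
pose c i := P i ++ ((if ep (P i) == x then [:: y] else [::]) ++
               rev (belast (head x (R (j i))) (behead (R (j i))))).
have crossi : forall a b z, z \in P a -> z \in R b ->
    [/\ z \in Y, z = ep (P a), z = ep (R b) & z \notin belast (head x (R b)) (behead (R b))].
  by move=> a b z za zb; exact: (cross x se' sY (HP a) (HR b) za zb).
have memc : forall i z, z \in c i ->
    z \in P i \/ (z \in R (j i) /\ ~ (z \in Y /\ z = ep (R (j i)))).
  move=> i z; rewrite /c !mem_cat => /orP[zP|/orP[zm|zrb]]; first by left.
  - right; move: zm; case: eqP => // ex; rewrite mem_seq1 => /eqP ->.
    have : y = ep (R (j i)) by rewrite jP /w ex eqxx.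
    move=> yE; split; first by rewrite yE; exact: ep_in.
    by case; rewrite (negbTE yY).
  - right; move: zrb (HR (j i)); rewrite mem_rev /ep.
    case: (R (j i)) => // t r0 /= zb /andP[/and4P[_ ut _ _] _].
    have ut' : uniq (t :: r0) := ut.
    move: ut'; rewrite (lastI t r0) rcons_uniq => /andP[ln _].
    split; first by rewrite mem_rcons in_cons zb orbT.
    by case=> _ zl; move: ln; rewrite -zl zb.
exists c; split.
- move=> i.
  have := crossi i (j i); have := jP i; have := HP i; have := HR (j i).
  rewrite /c /w /ep.
  case: (P i) => [//|s q]; case: (R (j i)) => [//|t r0] /=.
  move=> /andP[/and4P[pr ur tT _] _] /andP[/and4P[pq uq sS _] _] jPi cr.
  have ur' : uniq (t :: r0) := ur.
  move: ur'; rewrite (lastI t r0) rcons_uniq => /andP[ln ub].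
  have prb : path e (last t r0) (rev (belast t r0)).
    exact: (sub_path sub (rev_path_sym se' pr)).
  have uq' : uniq (s :: q) := uq.
  case: eqP jPi => [vx|vx] jPi; apply/and4P; split => //.
  + by rewrite cat_path (sub_path sub pq) /= vx exy -jPi prb.
  + change (uniq ((s :: q) ++ (y :: rev (belast t r0)))).
    rewrite cat_uniq uq' /= -jPi mem_rev ln rev_uniq ub !andbT /=.
    apply/negP => /orP[yin|/hasP[z zin zin2]].
    * have := cr _ yin (mem_last _ _); case=> yY' _ _ _.
      by move: yY; rewrite -jPi yY'.
    * rewrite mem_rev in zin.
      have := cr z zin2 (mem_belast zin); case=> _ _ _; by rewrite zin.
  + by rewrite last_cat vx /= -jPi last_rev_belast.
  + by rewrite cat_path (sub_path sub pq) /= -jPi prb.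
  + change (uniq ((s :: q) ++ (rev (belast t r0)))).
    rewrite cat_uniq uq' /= rev_uniq ub !andbT.
    apply/hasPn => z; rewrite mem_rev => zin; apply/negP => zin2.
    have := cr z zin2 (mem_belast zin); case=> _ _ _; by rewrite zin.
  + by rewrite last_cat /= -jPi last_rev_belast.
- move=> a b ab z za; apply/negP => zb.
  have [zPa|[zRa nRa]] := memc a z za; have [zPb|[zRb nRb]] := memc b z zb.
  + by move: (dP a b ab z zPa); rewrite zPb.
  + by apply: nRb; have [? _ ? _] := crossi a (j b) z zPa zRb; split.
  + by apply: nRa; have [? _ ? _] := crossi b (j a) z zPb zRa; split.
  + case: (eqVneq (j a) (j b)) => [jab|jab].
      move: (jP a) (jP b); rewrite jab => -> /winj wab.
      by move: ab; rewrite wab eqxx.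
    by move: (dR _ _ jab z zRa); rewrite zRb.
Qed.


Lemma step_core e e' S T Y k x y :
  symmetric e -> symmetric e' -> (forall u v, e' u v -> e u v) ->
  (forall u v, e u v -> ~~ e' u v -> ((u == x) && (v == y)) || ((u == y) && (v == x))) ->
  e x y ->
  (forall S T k, (forall Z, sep e' S T Z -> k <= #|Z|) ->
     exists P : 'I_k -> seq V, (forall i, pth e' S T (P i)) /\ disj P) ->
  (forall Z, sep e S T Z -> k <= #|Z|) -> sep e' S T Y -> #|Y| < k ->
  (forall s, s \in S -> ~~ reach e' Y s y) -> (forall t, t \in T -> ~~ reach e' Y t x) ->
  exists P : 'I_k -> seq V, (forall i, pth e S T (P i)) /\ disj P.
Proof.
move=> se se' sub rem exy IH hk sY Yk nCS nCT.
have [P [HP dP]] := IH S (x |: Y) k (fun Z sZ => hk Z (sepYx sub rem sY nCS sZ)).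
have rem' : forall u v, e u v -> ~~ e' u v ->
    ((u == y) && (v == x)) || ((u == x) && (v == y)).
  by move=> u v euv ne; rewrite orbC; exact: rem.
have [R [HR dR]] := IH T (y |: Y) k
  (fun Z sZ => hk Z (sep_sym se (sepYx sub rem' (sep_sym se' sY) nCT sZ))).
have [P' [HP' dP']] := trunc_fam HP dP.
have [R' [HR' dR']] := trunc_fam HR dR.
exact: (combine se' sub exy sY Yk HP' dP' HR' dR').
Qed.

Lemma base e S T k : (forall u v, ~~ e u v) -> (forall Z, sep e S T Z -> k <= #|Z|) ->
  exists P : 'I_k -> seq V, (forall i, pth e S T (P i)) /\ disj P.
Proof.
move=> ne hk.
have sST : sep e S T (S :&: T).
  move=> s t sS tT; apply/negP => /andP[sZ /connectP[p pp tl]].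
  case: p pp tl => [_ /= tl|a p] /=; first by move: sZ; rewrite in_setI sS -tl tT.
  by rewrite /avoid /= (negbTE (ne s a)).
have kc := hk _ sST.
exists (fun i => [:: @enum_val V (S :&: T) (widen_ord kc i)]); split.
  move=> i; have := enum_valP (widen_ord kc i).
  by rewrite inE /pth /= => /andP[-> ->].
move=> i j ij v; rewrite !mem_seq1 => /eqP ->; apply/negP => /eqP /enum_val_inj h.
by move: ij; rewrite -(inj_eq val_inj); move: (congr1 val h) => /= ->; rewrite eqxx.
Qed.

Lemma menger n : forall e, symmetric e -> #|[set p : V * V | e p.1 p.2]| <= n ->
  forall S T k, (forall Z, sep e S T Z -> k <= #|Z|) ->
  exists P : 'I_k -> seq V, (forall i, pth e S T (P i)) /\ disj P.
Proof.
elim: n => [|n IHn] e se he S T k hk.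
  apply: base hk => u v; apply/negP => euv.
  move: he; rewrite leqn0 => /eqP/cards0_eq E.
  have : (u, v) \in [set p : V * V | e p.1 p.2] by rewrite inE.
  by rewrite E inE.
case: (pickP [pred p : V * V | e p.1 p.2]) => [[x y] /= exy | none]; last first.
  by apply: base hk => u v; move: (none (u, v)) => /= ->.
pose e' := [rel u v | e u v && ~~ (((u == x) && (v == y)) || ((u == y) && (v == x)))].
have se' : symmetric e'.
  move=> u v /=; rewrite [e u v]se.
  by case: (u == x); case: (v == y); case: (u == y); case: (v == x); rewrite /= ?andbF.
have sub : forall u v, e' u v -> e u v by move=> u v /andP[].
have rem : forall u v, e u v -> ~~ e' u v ->
    ((u == x) && (v == y)) || ((u == y) && (v == x)).
  by move=> u v euv; rewrite /= euv /= negbK.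
have he' : #|[set p : V * V | e' p.1 p.2]| <= n.
  have : [set p : V * V | e' p.1 p.2] \proper [set p : V * V | e p.1 p.2].
    apply/properP; split.
      by apply/subsetP => p; rewrite !inE; exact: sub.
    by exists (x, y); rewrite !inE //= exy /= !eqxx.
  move/proper_card => lt; rewrite -ltnS; exact: leq_trans lt he.
have IH := IHn e' se' he'.
case: (classic (forall Z, sep e' S T Z -> k <= #|Z|)) => [H|H].
  have [P [HP dP]] := IH S T k H; exists P; split => // i.
  move: (HP i); case: (P i) => // a l /and4P[pl ul aS lT].
  by rewrite /pth (sub_path sub pl) ul aS lT.
have [Y [sY Yk]] : exists Y, sep e' S T Y /\ #|Y| < k.
  apply: NNPP => nex; apply: H => Z sZ; rewrite leqNgt; apply/negP => lt.
  by apply: nex; exists Z.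
have [s0 [t0 [s0S t0T r0]]] : exists s0 t0, [/\ s0 \in S, t0 \in T & reach e Y s0 t0].
  apply: NNPP => nex.
  have : k <= #|Y|.
    apply: hk => s t sS tT; apply/negP => r; apply: nex; by exists s, t.
  by rewrite leqNgt Yk.
pose CS v := exists2 s, s \in S & reach e' Y s v.
pose CT v := exists2 t, t \in T & reach e' Y t v.
have nSS : ~ (CS x /\ CS y).
  case=> hx hy; have [s' s'S r'] := close sub rem hx hy s0S r0.
  by move: (sY s' t0 s'S t0T); rewrite r'.
have nTT : ~ (CT x /\ CT y).
  case=> hx hy; have [t' t'T r'] := close sub rem hx hy t0T (reach_sym se r0).
  by move: (sY s0 t' s0S t'T); rewrite (reach_sym se' r').
have nST : forall v, ~ (CS v /\ CT v).
  move=> v [[s sS rs] [t tT rt]].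
  by move: (sY s t sS tT); rewrite (reach_trans rs (reach_sym se' rt)).
have toN : forall (U : {set V}) v, ~ (exists2 s, s \in U & reach e' Y s v) ->
    forall s, s \in U -> ~~ reach e' Y s v.
  by move=> U v nU s sU; apply/negP => r; apply: nU; exists s.
have rem' : forall u v, e u v -> ~~ e' u v ->
    ((u == y) && (v == x)) || ((u == x) && (v == y)).
  by move=> u v euv ne; rewrite orbC; exact: rem.
have eyx : e y x by rewrite se.
case: (classic (CS y)) => [csy|ncsy].
  apply: (step_core se se' sub rem' eyx IH hk sY Yk).
    by apply: toN => csx; apply: nSS.
  by apply: toN => cty; apply: (nST y).
case: (classic (CT x)) => [ctx|nctx].
  apply: (step_core se se' sub rem' eyx IH hk sY Yk).
    by apply: toN => csx; apply: (nST x).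
  by apply: toN => cty; apply: nTT.
apply: (step_core se se' sub rem exy IH hk sY Yk).
  exact: toN.
exact: toN.
Qed.

End Menger.

Lemma conn_in (V : finType) (e : rel V) (X Z : {set V}) a b :
  X :&: Z == set0 -> connected_set e X -> a \in X -> b \in X -> reach e Z a b.
Proof.
move=> /eqP E [_ cX] aX bX.
have nZ : forall v, v \in X -> v \notin Z.
  move=> v vX; apply/negP => vZ.
  by move/setP: E => /(_ v); rewrite inE vX vZ inE.
rewrite /reach nZ //=; apply: connect_sub (cX a b aX bX) => u v /= /and3P[euv uX vX].
by apply: connect1; rewrite /avoid /= euv !nZ.
Qed.

Theorem lemma2p4 (V : finType) (e : rel V) (B : {set {set V}}) (l : nat)
    (S T : {set V}) :
  simple_graph e -> bramble e B ->
  order_at_least (bramble_restr B S) l ->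
  order_at_least (bramble_restr B T) l ->
  exists P : 'I_l -> seq V,
    (forall i, path_from_to e S T (P i)) /\
    (forall i j, i != j -> forall v, v \in P i -> v \notin P j).
Proof.
move=> [se _] [conB touchB] hS hT.
have getX : forall U : {set V}, order_at_least (bramble_restr B U) l ->
    forall Z : {set V}, #|Z| < l ->
    exists X, [/\ X \in B, X :&: Z == set0 & exists2 u, u \in X & u \in U].
  move=> U hU Z lt; apply: NNPP => nex.
  have hit : hitting_set (bramble_restr B U) Z.
    move=> X; rewrite inE => /andP[XB XU]; apply/negP => /eqP E; apply: nex.
    exists X; split => //; first by rewrite E.
    by case/set0Pn: XU => u; rewrite inE => /andP[uX uU]; exists u.
  by move: lt; rewrite ltnNge (hU _ hit).
have hk : forall Z, sep e S T Z -> l <= #|Z|.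
  move=> Z sZ; rewrite leqNgt; apply/negP => lt.
  have [X1 [X1B X1Z [s sX1 sS]]] := getX S hS Z lt.
  have [X2 [X2B X2Z [t tX2 tT]]] := getX T hT Z lt.
  have c1 := conB X1 X1B; have c2 := conB X2 X2B.
  have : reach e Z s t.
    case: (touchB X1 X2 X1B X2B) => [[v v1 v2]|[a [b [a1 b2 eab]]]].
      exact: reach_trans (conn_in X1Z c1 sX1 v1) (conn_in X2Z c2 v2 tX2).
    have ra := conn_in X1Z c1 sX1 a1.
    have rb := conn_in X2Z c2 b2 tX2.
    have bZ : b \notin Z by case/andP: rb.
    exact: reach_trans (reach_step ra eab bZ) rb.
  by rewrite (negbTE (sZ s t sS tT)).
have [P [HP dP]] := @menger V _ e se (leqnn _) S T l hk.
exists P; split => // i.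
move: (HP i); case: (P i) => // a q /and4P[pq uq aS lT].
by exists a, q; split.
Qed.
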